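(* (1) If $A\in\mathrm{Sym}_{>}(\mathbb C^{2d})$, then $\bar A\#A\in\mathrm{Sym}_{\rm p}(\mathbb R^{2d})$. (2) If $A\in\mathrm{Sym}^{\rm qnd}_{>}(\mathbb C^{2d})$, then $\bar A\#A\in\mathrm{Sym}_{\rm p}^{\rm qnd}(\mathbb R^{2d})$.
   Context: Let $d\ge1$, let $\mathbb 1$ denote an identity matrix and $\theta=\begin{bmatrix}0&-i\mathbb 1_d\\ i\mathbb 1_d&0\end{bmatrix}$. $\mathrm{Sym}_{>}(\mathbb C^{n})$ is the set of complex symmetric $n\times n$ matrices with positive definite real part; $\mathrm{Sym}^{\rm qnd}_{>}(\mathbb C^{2d})=\{A\in\mathrm{Sym}_{>}(\mathbb C^{2d}):\det(\mathbb 1+A\theta)\ne0\}$; $\mathrm{Sym}_{>}(\mathbb R^{n})$ is the set of real symmetric positive definite matrices; $\mathrm{Sym}_{\rm p}(\mathbb R^{2d})=\{A\in\mathrm{Sym}_{>}(\mathbb R^{2d}):\sigma(A\theta)\subset[-1,1]\}$ and $\mathrm{Sym}_{\rm p}^{\rm qnd}(\mathbb R^{2d})=\{A\in\mathrm{Sym}_{\rm p}(\mathbb R^{2d}):\det(\mathbb 1+A\theta)\ne0\}$. For $A,B\in\mathrm{Sym}_>(\mathbb C^{2d})$, $A\#B:=J^TM^{-1}J$ with $M=\begin{bmatrix}\theta A\theta&-\theta\\ \theta&\theta B\theta\end{bmatrix}$ (invertible in this case) and $J=\begin{bmatrix}-\mathbb 1_{2d}\\ \mathbb 1_{2d}\end{bmatrix}$.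 $\bar A$ is the entrywise complex conjugate. *)

(* Defs.v *)
(* The complex field C^{...} is modelled by an arbitrary
   numeric closed field C (e.g. algC, or any model of the complex numbers). *)
From HB Require Import structures.
From mathcomp Require Import all_boot all_order all_algebra.
Set Implicit Arguments. Unset Strict Implicit. Unset Printing Implicit Defensive.
Import Order.TTheory GRing.Theory Num.Theory.
Local Open Scope ring_scope.

Section Defs.
Variable C : numClosedFieldType.

Definition theta (d : nat) : 'M[C]_(d + d) :=
  block_mx 0 (- ('i *: 1%:M)) ('i *: 1%:M) 0.

Definition cconj_mx (n : nat) (A : 'M[C]_n) : 'M[C]_n := map_mx (fun z => z^*) A.

Definition remx (n : nat) (A : 'M[C]_n) : 'M[C]_n := map_mx (fun z => 'Re z) A.

Definition real_mx (m n : nat) (A : 'M[C]_(m, n)) : Prop :=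
  forall i j, A i j \is Num.real.

Definition symmetric (n : nat) (A : 'M[C]_n) : Prop := A^T = A.

Definition posdef_real (n : nat) (S : 'M[C]_n) : Prop :=
  forall x : 'cV[C]_n, real_mx x -> x != 0 -> 0 < (x^T *m S *m x) 0 0.

Definition SymC_gt (n : nat) (A : 'M[C]_n) : Prop :=
  symmetric A /\ posdef_real (remx A).

Definition SymC_gt_qnd (d : nat) (A : 'M[C]_(d + d)) : Prop :=
  SymC_gt A /\ \det (1%:M + A *m theta d) != 0.

Definition SymR_gt (n : nat) (A : 'M[C]_n) : Prop :=
  real_mx A /\ symmetric A /\ posdef_real A.

Definition SymR_p (d : nat) (A : 'M[C]_(d + d)) : Prop :=
  SymR_gt A /\
  forall l : C, eigenvalue (A *m theta d) l -> l \is Num.real /\ -1 <= l <= 1.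

Definition SymR_p_qnd (d : nat) (A : 'M[C]_(d + d)) : Prop :=
  SymR_p A /\ \det (1%:M + A *m theta d) != 0.

Definition sharpM (d : nat) (A B : 'M[C]_(d + d)) : 'M[C]_((d + d) + (d + d)) :=
  block_mx (theta d *m A *m theta d) (- theta d) (theta d) (theta d *m B *m theta d).

Definition Jmx (d : nat) : 'M[C]_((d + d) + (d + d), d + d) := col_mx (- 1%:M) 1%:M.

Definition sharp (d : nat) (A B : 'M[C]_(d + d)) : 'M[C]_(d + d) :=
  (Jmx d)^T *m invmx (sharpM A B) *m Jmx d.

End Defs.

(* Main.v *)
From Pilot Require Import Defs.
From HB Require Import structures.
From mathcomp Require Import all_boot all_order all_algebra ring.
Set Implicit Arguments. Unset Strict Implicit. Unset Printing Implicit Defensive.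
Import Order.TTheory GRing.Theory Num.Theory.
Local Open Scope ring_scope.

Section Aux.
Variable C : numClosedFieldType.

Definition cj m p (X : 'M[C]_(m,p)) : 'M[C]_(m,p) := map_mx Num.conj X.
Definition ctr m p (X : 'M[C]_(m,p)) : 'M[C]_(p,m) := (cj X)^T.

Lemma cjM m p q (X : 'M[C]_(m,p)) (Y : 'M[C]_(p,q)) : cj (X *m Y) = cj X *m cj Y.
Proof. exact: map_mxM. Qed.
Lemma cjD m p (X Y : 'M[C]_(m,p)) : cj (X + Y) = cj X + cj Y.
Proof. exact: map_mxD. Qed.
Lemma cjN m p (X : 'M[C]_(m,p)) : cj (- X) = - cj X.
Proof. exact: map_mxN. Qed.
Lemma cjB m p (X Y : 'M[C]_(m,p)) : cj (X - Y) = cj X - cj Y.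
Proof. exact: map_mxB. Qed.
Lemma cjZ m p a (X : 'M[C]_(m,p)) : cj (a *: X) = a^* *: cj X.
Proof. exact: map_mxZ. Qed.
Lemma cj0 m p : cj (0 : 'M[C]_(m,p)) = 0.
Proof. exact: map_mx0. Qed.
Lemma cj1 m : cj (1%:M : 'M[C]_m) = 1%:M.
Proof. exact: map_mx1. Qed.
Lemma cjK m p (X : 'M[C]_(m,p)) : cj (cj X) = X.
Proof. by apply/matrixP => i j; rewrite !mxE conjCK. Qed.
Lemma cj_tr m p (X : 'M[C]_(m,p)) : cj X^T = (cj X)^T.
Proof. by rewrite /cj map_trmx. Qed.
Lemma cj_inv m (X : 'M[C]_m) : cj (invmx X) = invmx (cj X).
Proof. exact: map_invmx. Qed.

Lemma ctrM m p q (X : 'M[C]_(m,p)) (Y : 'M[C]_(p,q)) : ctr (X *m Y) = ctr Y *m ctr X.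
Proof. by rewrite /ctr cjM trmx_mul. Qed.
Lemma ctrD m p (X Y : 'M[C]_(m,p)) : ctr (X + Y) = ctr X + ctr Y.
Proof. by rewrite /ctr cjD linearD. Qed.
Lemma ctrN m p (X : 'M[C]_(m,p)) : ctr (- X) = - ctr X.
Proof. by rewrite /ctr cjN linearN. Qed.
Lemma ctrB m p (X Y : 'M[C]_(m,p)) : ctr (X - Y) = ctr X - ctr Y.
Proof. by rewrite /ctr cjB linearB. Qed.
Lemma ctrZ m p a (X : 'M[C]_(m,p)) : ctr (a *: X) = a^* *: ctr X.
Proof. by rewrite /ctr cjZ linearZ. Qed.
Lemma ctr0 m p : ctr (0 : 'M[C]_(m,p)) = 0.
Proof. by rewrite /ctr cj0 trmx0. Qed.
Lemma ctrK m p (X : 'M[C]_(m,p)) : ctr (ctr X) = X.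
Proof. by rewrite /ctr cj_tr trmxK cjK. Qed.
Lemma ctr_inv m (X : 'M[C]_m) : ctr (invmx X) = invmx (ctr X).
Proof. by rewrite /ctr cj_inv trmx_inv. Qed.
Lemma ctr1 m : ctr (1%:M : 'M[C]_m) = 1%:M.
Proof. by rewrite /ctr cj1 trmx1. Qed.

Definition hform n (X : 'M[C]_n) (v : 'cV[C]_n) : C := (ctr v *m X *m v) 0 0.

Lemma hformD n (X Y : 'M[C]_n) v : hform (X + Y) v = hform X v + hform Y v.
Proof. by rewrite /hform mulmxDr mulmxDl mxE. Qed.
Lemma hformB n (X Y : 'M[C]_n) v : hform (X - Y) v = hform X v - hform Y v.
Proof. by rewrite /hform mulmxBr mulmxBl !mxE. Qed.
Lemma hformZ n a (X : 'M[C]_n) v : hform (a *: X) v = a * hform X v.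
Proof. by rewrite /hform -scalemxAr -scalemxAl !mxE. Qed.
Lemma hform_conj n (X K : 'M[C]_n) v :
  hform (ctr K *m X *m K) v = hform X (K *m v).
Proof. by rewrite /hform ctrM !mulmxA. Qed.
Lemma hform0 n (X : 'M[C]_n) : hform X 0 = 0.
Proof. by rewrite /hform mulmx0 mxE. Qed.

Definition pdH n (X : 'M[C]_n) := forall v, v != 0 -> 0 < hform X v.
Definition psdH n (X : 'M[C]_n) := forall v, 0 <= hform X v.

Lemma pd_psd n (X : 'M[C]_n) : pdH X -> psdH X.
Proof.
move=> h v; have [->|nz] := eqVneq v 0; first by rewrite hform0.
exact/ltW/h.
Qed.

Lemma ker_unit n (X : 'M[C]_n) :
  (forall v : 'rV_n, v *m X = 0 -> v = 0) -> X \in unitmx.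
Proof.
move=> h; rewrite -row_free_unit -kermx_eq0; apply/eqP/row_matrixP => i.
rewrite row0; apply: h; by rewrite -row_mul mulmx_ker row0.
Qed.

Lemma cker_unit n (X : 'M[C]_n) :
  (forall v : 'cV_n, X *m v = 0 -> v = 0) -> X \in unitmx.
Proof.
move=> h; rewrite -unitmx_tr; apply: ker_unit => v hv.
apply: trmx_inj; rewrite trmx0; apply: h; by rewrite -[X]trmxK -trmx_mul hv trmx0.
Qed.

Lemma pd_unit n (X : 'M[C]_n) : pdH X -> X \in unitmx.
Proof.
move=> h; apply: cker_unit => v hv; apply/eqP; apply: contraT => nz.
by have := h v nz; rewrite /hform -mulmxA hv mulmx0 mxE ltxx.
Qed.

Lemma pd_inv n (X : 'M[C]_n) : ctr X = X -> pdH X -> pdH (invmx X).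
Proof.
move=> hX h w nz; have U := pd_unit h.
have -> : w = X *m (invmx X *m w) by rewrite mulmxA mulmxV // mul1mx.
rewrite -hform_conj hX mulmxV // mul1mx; apply: h.
apply: contraNneq nz => e; by rewrite -(mulKVmx U w) e mulmx0.
Qed.

Lemma psd_conj n (X K : 'M[C]_n) : psdH X -> psdH (ctr K *m X *m K).
Proof. by move=> h v; rewrite hform_conj. Qed.

Lemma bilin n (R : 'M[C]_n) (u1 u2 : 'rV_n) (w1 w2 : 'cV_n) c e :
  ((u1 + c *: u2) *m R *m (w1 + e *: w2)) 0 0 =
  (u1 *m R *m w1) 0 0 + e * (u1 *m R *m w2) 0 0 + c * (u2 *m R *m w1) 0 0
  + c * e * (u2 *m R *m w2) 0 0.
Proof.
rewrite !(mulmxDl, mulmxDr) -!(scalemxAl, scalemxAr) !mxE. ring.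
Qed.

Lemma realP m p (X : 'M[C]_(m,p)) : real_mx X <-> cj X = X.
Proof.
split=> [h|h i j]; first by apply/matrixP => i j; rewrite mxE conj_Creal.
by rewrite CrealE -{2}h mxE.
Qed.

Lemma pd_real n (R : 'M[C]_n) : cj R = R -> R^T = R -> posdef_real R -> pdH R.
Proof.
move=> hc hs hp v nz.
set a := map_mx (fun z => 'Re z) v; set b := map_mx (fun z => 'Im z) v.
have ra : real_mx a by move=> i j; rewrite mxE.
have rb : real_mx b by move=> i j; rewrite mxE.
have ev : v = a + 'i *: b.
  by apply/matrixP => i j; rewrite !mxE [LHS]Crect.
have ctrv : ctr v = a^T + (- 'i) *: b^T.
  by rewrite ev ctrD ctrZ conjCi /ctr (realP _).1 // (realP _).1.
have sym : forall x y : 'cV_n, (x^T *m R *m y) 0 0 = (y^T *m R *m x) 0 0.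
  move=> x y; have tr00 : forall M : 'M[C]_1, M 0 0 = M^T 0 0 by move=> M; rewrite mxE.
  by rewrite tr00 !trmx_mul trmxK hs mulmxA.
have ge : forall x : 'cV_n, real_mx x -> 0 <= (x^T *m R *m x) 0 0.
  move=> x rx; have [->|xnz] := eqVneq x 0; first by rewrite mulmx0 mxE.
  exact/ltW/hp.
rewrite /hform ctrv [in X in X 0 0]ev bilin (sym b a).
have -> : forall p q : C, p + 'i * q + - 'i * q + - 'i * 'i * (b^T *m R *m b) 0 0
    = p + (b^T *m R *m b) 0 0.
  move=> p q; have -> : - 'i * 'i = 1 :> C by rewrite mulNr mulCii opprK.
  ring.
have [a0|anz] := eqVneq a 0.
  have bnz : b != 0 by apply: contraNneq nz => b0; rewrite ev a0 b0 scaler0 addr0.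
  by rewrite a0 trmx0 !mul0mx mxE add0r; apply: hp.
by apply: ltr_wpDr; [apply: ge | apply: hp].
Qed.

End Aux.

Section Th.
Variable C : numClosedFieldType.
Variable d : nat.
Local Notation n := (d + d).
Local Notation th := (theta C d).

Lemma ii1 : 'i *: (1%:M : 'M[C]_d) = 'i%:M.
Proof. by rewrite scalemx1. Qed.

Lemma thth : th *m th = 1%:M.
Proof.
rewrite /theta mulmx_block !(mul0mx, mulmx0, addr0, add0r) ii1.
rewrite mulNmx mulmxN -!scalar_mxM mulCii.
by rewrite -!raddfN /= opprK -scalar_mx_block.
Qed.

Lemma cj_th : cj th = - th.
Proof.
rewrite /cj /theta map_block_mx !map_mx0 map_mxN map_mxZ map_mx1 /= conjCi.
by rewrite opp_block_mx !oppr0 scaleNr opprK.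
Qed.

Lemma tr_th : th^T = - th.
Proof.
rewrite /theta tr_block_mx !trmx0 linearN /= !linearZ /= trmx1.
by rewrite opp_block_mx !oppr0 !scalerN opprK.
Qed.

Lemma ctr_th : ctr th = th.
Proof. by rewrite /ctr cj_th linearN /= tr_th opprK. Qed.

Lemma th_unit : th \in unitmx.
Proof. by case: (mulmx1_unit thth). Qed.

Lemma thK m (X : 'M[C]_(n, m)) : th *m (th *m X) = X.
Proof. by rewrite mulmxA thth mul1mx. Qed.
End Th.

Lemma sAl (R : pzSemiRingType) m n p a (A : 'M[R]_(m, n)) (B : 'M_(n, p)) :
  (a *: A) *m B = a *: (A *m B).
Proof. by rewrite scalemxAl. Qed.
Lemma sAr (R : comPzRingType) m n p a (A : 'M[R]_(m, n)) (B : 'M_(n, p)) :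
  A *m (a *: B) = a *: (A *m B).
Proof. by rewrite scalemxAr. Qed.

Ltac lin := apply/matrixP => ? ?;
  rewrite ?(mulmxDr, mulmxDl, mulmxBr, mulmxBl, mulmxN, mulNmx, sAl, sAr) !mxE; ring.

Section Core.
Variable C : numClosedFieldType.
Variables (n p : nat) (th R P : 'M[C]_n).
Hypothesis thth : th *m th = 1%:M.
Hypothesis Ru : R \in unitmx.
Let K := th - P.
Let H := R + (th + P) *m invmx R *m K.
Hypothesis Hu : H \in unitmx.

Lemma thth_r m (X : 'M[C]_(m, n)) : X *m th *m th = X.
Proof. by rewrite -mulmxA thth mulmx1. Qed.

Lemma solve (Z1 Z2 U : 'M[C]_(n,p)) :
 block_mx (th *m (R - P) *m th) (- th) th (th *m (R + P) *m th) *m col_mx Z1 Z2 = col_mx (- U) U ->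
 Z2 - Z1 = 2 *: (th *m invmx H *m th *m U) /\ Z1 + Z2 = th *m invmx R *m K *m th *m (Z2 - Z1).
Proof.
have [x ->] : exists x, Z1 = th *m x by exists (th *m Z1); rewrite mulmxA thth mul1mx.
have [y ->] : exists y, Z2 = th *m y by exists (th *m Z2); rewrite mulmxA thth mul1mx.
rewrite mul_block_col => /eq_col_mx [e1 e2].
have f1 : (R - P) *m x - th *m y = - (th *m U).
  have := congr1 (mulmx th) e1; rewrite mulmxDr !mulmxA thth mul1mx !thth_r.
  by rewrite !(mulmxN, mulNmx) thth_r.
have f2 : th *m x + (R + P) *m y = th *m U.
  have := congr1 (mulmx th) e2; rewrite mulmxDr !mulmxA thth mul1mx !thth_r.
  by rewrite mul1mx.
have Es : R *m (x + y) = K *m (y - x).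
  apply/eqP; rewrite -subr_eq0; apply/eqP.
  have -> : R *m (x + y) - K *m (y - x) = ((R - P) *m x - th *m y + th *m U)
     + (th *m x + (R + P) *m y - th *m U) by rewrite /K; lin.
  by rewrite f1 f2 addNr subrr addr0.
have Et : H *m (y - x) = 2 *: (th *m U).
  rewrite /H mulmxDl -!mulmxA -Es mulKmx //.
  apply/eqP; rewrite -subr_eq0; apply/eqP.
  have -> : R *m (y - x) + (th + P) *m (x + y) - 2 *: (th *m U) =
     (th *m x + (R + P) *m y - th *m U) - ((R - P) *m x - th *m y + th *m U) by lin.
  by rewrite f1 f2 addNr subrr subr0.
have Ht : y - x = 2 *: (invmx H *m th *m U) by rewrite -[LHS](mulKmx Hu) Et sAr mulmxA.
split.
  by rewrite -mulmxBr Ht -scalemxAr !mulmxA.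
rewrite -mulmxBr -mulmxDr [RHS]mulmxA thth_r.
have -> : x + y = invmx R *m K *m (y - x) by rewrite -mulmxA -Es mulKmx.
by rewrite !mulmxA.
Qed.
End Core.


Section Core2.
Variable C : numClosedFieldType.
Variable d : nat.
Local Notation n := (d + d).
Local Notation th := (theta C d).
Variables (R P Ab A : 'M[C]_n).
Hypothesis Ru : R \in unitmx.
Hypothesis hAb : Ab = R - P.
Hypothesis hA : A = R + P.
Let K := th - P.
Let H := R + (th + P) *m invmx R *m K.
Hypothesis Hu : H \in unitmx.

Lemma M_unit : sharpM Ab A \in unitmx.
Proof.
apply: cker_unit => v hv.
rewrite -(vsubmxK v) in hv *.
have [] := @solve _ _ _ _ _ _ (thth C d) Ru Hu (usubmx v) (dsubmx v) 0.
  by rewrite -hAb -hA hv oppr0 col_mx0.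
rewrite mulmx0 scaler0 => e1; rewrite e1 mulmx0 => e2.
have h2 : forall Z : 'M[C]_(d + d, 1), Z = 2^-1 *: (Z + Z).
  move=> Z; apply/matrixP => i j; rewrite !mxE; field.
  by [].
have u0 : usubmx v = 0.
  rewrite [LHS]h2; have -> : usubmx v + usubmx v = (usubmx v + dsubmx v) - (dsubmx v - usubmx v) by lin.
  by rewrite e1 e2 subr0 scaler0.
have d0 : dsubmx v = 0.
  rewrite [LHS]h2; have -> : dsubmx v + dsubmx v = (usubmx v + dsubmx v) + (dsubmx v - usubmx v) by lin.
  by rewrite e1 e2 addr0 scaler0.
by rewrite u0 d0 col_mx0.
Qed.

Lemma sharpE : sharp Ab A = 2 *: (th *m invmx H *m th).
Proof.
rewrite /sharp -mulmxA.
set Z := invmx (sharpM Ab A) *m Jmx C d.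
have hZ : sharpM Ab A *m Z = col_mx (- 1%:M) 1%:M.
  by rewrite /Z mulmxA mulmxV ?M_unit // mul1mx.
rewrite -(vsubmxK Z) in hZ *.
have [e1 _] := @solve _ _ _ _ _ _ (thth C d) Ru Hu (usubmx Z) (dsubmx Z) 1%:M ltac:(by rewrite -hAb -hA hZ).
rewrite /Jmx tr_col_mx mul_row_col linearN /= trmx1 !mul1mx mulNmx mul1mx addrC e1.
by rewrite mulmx1.
Qed.
End Core2.

Section Gen.
Variable C : numClosedFieldType.
Variable n : nat.
Variables th R P : 'M[C]_n.
Hypothesis Ru : R \in unitmx.

Lemma Hp_gen : R + (th + P) *m invmx R *m (th - P) + 2 *: th
   = (th + P + R) *m invmx R *m (th - P + R).
Proof.
rewrite (mulmxDl (th + P) R) (mulmxDr _ (th - P) R) (mulmxV Ru) !mulmxDl !(mulmxKV Ru) !mul1mx.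
lin.
Qed.

Lemma Hm_gen : R + (th + P) *m invmx R *m (th - P) - 2 *: th
   = (th + P - R) *m invmx R *m (th - P - R).
Proof.
rewrite (mulmxBl (th + P) R) (mulmxBr _ (th - P) R) (mulmxV Ru) !mulmxBl !(mulmxKV Ru) !mul1mx.
lin.
Qed.
End Gen.

Section Main.
Variable C : numClosedFieldType.
Variable d : nat.
Local Notation n := (d + d).
Local Notation th := (theta C d).
Variable A : 'M[C]_n.
Hypothesis hA : SymC_gt A.
Let R := remx A.
Let P := A - R.
Let K := th - P.
Let Ri := invmx R.
Let H := R + (th + P) *m Ri *m K.

Lemma cconjE : cconj_mx A = cj A.
Proof. by apply/matrixP => i j; rewrite !mxE. Qed.

Lemma Rreal : cj R = R.
Proof. by apply/matrixP => i j; rewrite !mxE conj_Creal. Qed.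

Lemma Rsym : R^T = R.
Proof. by apply/matrixP => i j; rewrite !mxE; move: hA.1 => /matrixP/(_ i j); rewrite mxE => ->. Qed.

Lemma ctrR : ctr R = R.
Proof. by rewrite /ctr Rreal Rsym. Qed.

Lemma cjA : cj A = R - P.
Proof.
apply/matrixP => i j; rewrite !mxE.
have e := Crect (A i j); have ec := conjC_rect (Creal_Re (A i j)) (Creal_Im (A i j)).
rewrite -e in ec; rewrite ec; set r := 'Re _; set m := 'Im _.
by rewrite [in RHS]e; ring.
Qed.

Lemma eA : A = R + P.
Proof. by rewrite /P (addrC R) subrK. Qed.

Lemma ctrA : ctr A = cj A.
Proof. by rewrite /ctr -cj_tr hA.1. Qed.

Lemma ctrP : ctr P = - P.
Proof. by rewrite /P ctrB ctrA ctrR cjA /P; lin. Qed.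

Lemma cjP : cj P = - P.
Proof. by rewrite {1}/P cjB Rreal cjA /P; lin. Qed.

Lemma Rpd : pdH R.
Proof. exact: pd_real Rreal Rsym hA.2. Qed.

Lemma Ru : R \in unitmx.
Proof. exact: pd_unit Rpd. Qed.

Lemma ctrRi : ctr Ri = Ri.
Proof. by rewrite /Ri ctr_inv ctrR. Qed.

Lemma cjRi : cj Ri = Ri.
Proof. by rewrite /Ri cj_inv Rreal. Qed.

Lemma Ripd : pdH Ri.
Proof. exact: pd_inv ctrR Rpd. Qed.

Lemma ctr_K : ctr K = th + P.
Proof. by rewrite /K ctrB ctr_th ctrP opprK. Qed.

Lemma cj_K : cj K = - K.
Proof. rewrite /K cjB cj_th cjP; lin. Qed.

Lemma HE : H = R + ctr K *m Ri *m K.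
Proof. by rewrite ctr_K. Qed.

Lemma Hherm : ctr H = H.
Proof. by rewrite HE ctrD ctrR !ctrM ctrK ctrRi !mulmxA. Qed.

Lemma Hreal : cj H = H.
Proof. by rewrite /H cjD Rreal !cjM cjRi cj_K cjD cj_th cjP; lin. Qed.

Lemma Hpd : pdH H.
Proof.
move=> v nz; rewrite HE hformD hform_conj.
exact: ltr_wpDr (pd_psd Ripd _) (Rpd nz).
Qed.

Lemma Hu : H \in unitmx.
Proof. exact: pd_unit Hpd. Qed.

Lemma HpE : H + 2 *: th = ctr (K + R) *m Ri *m (K + R).
Proof.
rewrite ctrD ctr_K ctrR /H /Ri /K; exact: Hp_gen Ru.
Qed.

Lemma HmE : H - 2 *: th = ctr (K - R) *m Ri *m (K - R).
Proof.
rewrite ctrB ctr_K ctrR /H /Ri /K; exact: Hm_gen Ru.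
Qed.


Let Hi := invmx H.

Lemma S_E : sharp (cconj_mx A) A = 2 *: (th *m Hi *m th).
Proof. by rewrite cconjE; exact: sharpE Ru cjA eA Hu. Qed.

Lemma Hipd : pdH Hi.
Proof. exact: pd_inv Hherm Hpd. Qed.

Lemma cjHi : cj Hi = Hi.
Proof. by rewrite /Hi cj_inv Hreal. Qed.

Lemma trH : H^T = H.
Proof. by rewrite -{1}Hreal -/(ctr H) Hherm. Qed.

Lemma S_real : real_mx (2 *: (th *m Hi *m th)).
Proof.
apply/realP; rewrite cjZ !cjM cj_th cjHi conjC_nat.
by rewrite !(mulNmx, mulmxN) opprK.
Qed.

Lemma S_sym : Pilot.Defs.symmetric (2 *: (th *m Hi *m th)).
Proof.
rewrite /Pilot.Defs.symmetric linearZ /= !trmx_mul tr_th /Hi trmx_inv trH.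
by rewrite !(mulNmx, mulmxN) opprK mulmxA.
Qed.

Lemma S_pd : posdef_real (2 *: (th *m Hi *m th)).
Proof.
move=> x /realP rx nz.
have -> : x^T = ctr x by rewrite /ctr rx.
have e : ctr x *m (2 *: (th *m Hi *m th)) *m x = 2 *: (ctr (th *m x) *m Hi *m (th *m x)).
  by rewrite ctrM ctr_th sAr sAl !mulmxA.
rewrite e mxE; apply: mulr_gt0; first by rewrite ltr0n.
apply: Hipd; apply: contraNneq nz => h.
by rewrite -[x](thK) h mulmx0.
Qed.

Lemma eig_core (v : 'rV[C]_n) l :
  v *m (2 *: (th *m Hi *m th) *m th) = l *: v -> v != 0 ->
  exists c : 'cV[C]_n, c != 0 /\ 2 * hform th c = l * hform H c.
Proof.
move=> hv nz.
have e1 : 2 *: (th *m Hi *m th) *m th = 2 *: (th *m Hi).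
  by rewrite sAl (thth_r (thth C d)).
rewrite e1 in hv.
set z := v *m th *m Hi.
have vz : v = z *m H *m th by rewrite /z mulmxKV ?Hu // (thth_r (thth C d)).
have znz : z != 0 by apply: contraNneq nz => h; rewrite vz h !mul0mx.
exists (ctr z); split.
  by apply: contraNneq znz => h; rewrite -[z]ctrK h ctr0.
have h2 : 2 *: z = l *: (z *m H *m th) by rewrite -vz -hv sAr mulmxA.
have := congr1 (fun M => (M *m th *m ctr z) 0 0) h2.
rewrite /hform ctrK /= !sAl (thth_r (thth C d)) !mxE => ->.
done.
Qed.

Lemma scal_bound (a b l : C) : 0 < a -> 2 * b = l * a -> 0 <= a + 2 * b -> 0 <= a - 2 * b ->
  l \is Num.real /\ -1 <= l <= 1.
Proof.
move=> a0 e hp hm; rewrite e in hp hm.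
have hp' : 0 <= 1 + l by rewrite -(pmulr_rge0 _ a0); rewrite mulrDr mulr1 mulrC.
have hm' : 0 <= 1 - l by rewrite -(pmulr_rge0 _ a0); rewrite mulrBr mulr1 mulrC.
split.
  have -> : l = (1 + l) - 1 by rewrite addrC addKr.
  by rewrite rpredB ?ger0_real ?real1.
by rewrite -subr_ge0 opprK addrC hp' -subr_ge0.
Qed.

Lemma Hp_form (c : 'cV[C]_n) : hform H c + 2 * hform th c = hform Ri ((K + R) *m c).
Proof. by rewrite -hformZ -hformD HpE hform_conj. Qed.

Lemma Hm_form (c : 'cV[C]_n) : hform H c - 2 * hform th c = hform Ri ((K - R) *m c).
Proof. by rewrite -hformZ -hformB HmE hform_conj. Qed.

Lemma S_eig l : eigenvalue (2 *: (th *m Hi *m th) *m th) l ->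
  l \is Num.real /\ -1 <= l <= 1.
Proof.
move=> /eigenvalueP [v hv nz].
have [c [cnz e]] := eig_core hv nz.
apply: (scal_bound (Hpd cnz) e).
  by rewrite Hp_form; exact: (pd_psd Ripd).
by rewrite Hm_form; exact: (pd_psd Ripd).
Qed.

Lemma KR_unit : \det (1%:M + A *m th) != 0 -> (K + R) \in unitmx.
Proof.
move=> hdet.
have U1 : (1%:M + A *m th) \in unitmx by rewrite unitmxE unitfE.
have U2 : (1%:M + th *m A) \in unitmx.
  have -> : 1%:M + th *m A = th *m (1%:M + A *m th) *m th.
    by rewrite mulmxDr mulmx1 mulmxDl thth !mulmxA (thth_r (thth C d)).
  by rewrite !unitmx_mul th_unit U1.
have U3 : (1%:M - A *m th) \in unitmx.
  have -> : 1%:M - A *m th = (1%:M + th *m A)^T.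
    by rewrite linearD /= trmx1 trmx_mul tr_th hA.1 mulmxN.
  by rewrite unitmx_tr.
have -> : K + R = (1%:M + cj A *m th) *m th.
  by rewrite mulmxDl mul1mx (thth_r (thth C d)) cjA /K; lin.
rewrite unitmx_mul th_unit andbT.
have -> : 1%:M + cj A *m th = cj (1%:M - A *m th).
  by rewrite cjB cj1 cjM cj_th mulmxN opprK.
by rewrite /cj map_unitmx.
Qed.

Lemma S_qnd : \det (1%:M + A *m th) != 0 ->
  \det (1%:M + 2 *: (th *m Hi *m th) *m th) != 0.
Proof.
move=> hdet; have KRu := KR_unit hdet.
rewrite -unitfE -unitmxE; apply: ker_unit => v hv.
apply/eqP; apply: contraT => nz.
have hv' : v *m (2 *: (th *m Hi *m th) *m th) = (-1) *: v.
  by move: hv; rewrite mulmxDr mulmx1 scaleN1r => /eqP; rewrite addrC addr_eq0 => /eqP.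
have [c [cnz e]] := eig_core hv' nz.
have h0 : hform Ri ((K + R) *m c) = 0 by rewrite -Hp_form e mulN1r subrr.
have : (K + R) *m c = 0.
  apply/eqP; apply: contraT => h; by have := Ripd h; rewrite h0 ltxx.
move/(congr1 (mulmx (invmx (K + R)))); rewrite mulKmx // mulmx0 => c0.
by rewrite c0 eqxx in cnz.
Qed.

End Main.

Theorem mainTheorem8 (C : numClosedFieldType) (d : nat) (hd : (0 < d)%N) :
  (forall A : 'M[C]_(d + d), SymC_gt A -> SymR_p (sharp (cconj_mx A) A)) /\
  (forall A : 'M[C]_(d + d), SymC_gt_qnd A -> SymR_p_qnd (sharp (cconj_mx A) A)).
Proof.
have P1 : forall A : 'M[C]_(d + d), SymC_gt A -> SymR_p (sharp (cconj_mx A) A).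
  move=> A hA; rewrite (S_E hA); split; last exact: S_eig.
  by split; [exact: S_real | split; [exact: S_sym | exact: S_pd]].
split=> // A [hA hdet]; split; first exact: P1.
by rewrite (S_E hA); exact: S_qnd.
Qed.
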